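(* Let $(P,Q)$ be a quasi-projection pair on a Hilbert $C^*$-module $H$. Then $$\|(I-P)Q\|=\|Q(I-P)\|,\qquad \|(I-Q)P\|=\|P(I-Q)\|,$$ and $$\big\|(P-Q)^2\big\|\le\max\big\{\|(I-P)Q\|,\|(I-Q)P\|\big\}\le\|P-Q\|.$$
   Context: $H$ is a Hilbert module over a $C^*$-algebra, $\mathcal{L}(H)$ the adjointable operators. A quasi-projection pair is $(P,Q)$ with $P\in\mathcal{L}(H)$ a projection (self-adjoint idempotent), $Q\in\mathcal{L}(H)$ an idempotent, and $Q^*=(2P-I)Q(2P-I)$. *)

(* Defs.v *)
From HB Require Import structures.
From mathcomp Require Import all_boot all_order all_algebra.
From mathcomp Require Import reals.
From mathcomp.real_closed Require Import complex.
Set Implicit Arguments. Unset Strict Implicit. Unset Printing Implicit Defensive.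
Import Order.TTheory GRing.Theory Num.Theory.
Local Open Scope ring_scope.

(* For a Hilbert C*-module H, the algebra
   L(H) of adjointable operators with the adjoint and operator norm is such
   an algebra. *)
Record unital_Cstar_algebra (R : realType) (A : algType R[i])
    (star : A -> A) (nrm : A -> R) : Prop := {
  star_invol : forall x, star (star x) = x;
  star_add : forall x y, star (x + y) = star x + star y;
  star_scale : forall (a : R[i]) x, star (a *: x) = (conjc a) *: star x;
  star_mul : forall x y, star (x * y) = star y * star x;
  nrm_ge0 : forall x, 0 <= nrm x;
  nrm_eq0 : forall x, nrm x = 0 -> x = 0;
  nrm_triangle : forall x y, nrm (x + y) <= nrm x + nrm y;
  nrm_scale : forall (a : R[i]) x, nrm (a *: x) = ComplexField.Normc.normc a * nrm x;
  nrm_submul : forall x y, nrm (x * y) <= nrm x * nrm y;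
  nrm_Cstar : forall x, nrm (star x * x) = nrm x ^+ 2;
  nrm_complete : forall u : nat -> A,
    (forall e : R, 0 < e -> exists N, forall m n, (N <= m)%N -> (N <= n)%N ->
        nrm (u m - u n) < e) ->
    exists l, forall e : R, 0 < e -> exists N, forall n, (N <= n)%N ->
        nrm (u n - l) < e
}.

Definition is_projection (R : realType) (A : algType R[i]) (star : A -> A) (P : A) : Prop :=
  star P = P /\ P * P = P.

Definition quasi_projection_pair (R : realType) (A : algType R[i])
    (star : A -> A) (P Q : A) : Prop :=
  is_projection star P /\ Q * Q = Q /\
  star Q = (P *+ 2 - 1) * Q * (P *+ 2 - 1).

(* Main.v *)
Require Import Defs.
From HB Require Import structures.
From mathcomp Require Import all_boot all_order all_algebra.
From mathcomp Require Import reals.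
From mathcomp.real_closed Require Import complex.
From mathcomp Require Import lra.
Import Order.TTheory GRing.Theory Num.Theory.
Local Open Scope ring_scope.
Set Implicit Arguments.

Lemma real_lim (R : realType) (t m : R) : 0 <= t -> 0 <= m ->
  (forall n, t ^+ (2 ^ n) <= 2 * m ^+ (2 ^ n)) -> t <= m.
Proof.
move=> t0 m0 H; rewrite leNgt; apply/negP => mt.
have [m00|mpos] := eqVneq m 0.
  by have := H 0%N; rewrite expn0 !expr1 m00 mulr0; lra.
have mp : 0 < m by rewrite lt_def mpos m0.
set r := t / m.
have r1 : 1 < r by rewrite /r ltr_pdivlMr // mul1r.
have bern : forall k : nat, 1 + k%:R * (r - 1) <= r ^+ k.
  elim=> [|k IH]; first by rewrite mul0r addr0 expr0.
  rewrite exprS -natr1.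
  have k0 : 0 <= k%:R :> R by apply: ler0n.
  have h1 : 0 <= r * (r ^+ k - (1 + k%:R * (r - 1))) by apply: mulr_ge0; lra.
  have h2 : 0 <= k%:R * ((r - 1) * (r - 1)) by apply: mulr_ge0 => //; nra.
  nra.
have hr : forall n, r ^+ (2 ^ n) <= 2.
  move=> n; have := H n.
  have tm : t = r * m by rewrite /r mulfVK.
  rewrite tm exprMn => h.
  have mk : 0 < m ^+ (2 ^ n) by apply: exprn_gt0.
  by rewrite -(ler_pM2r mk).
have r10 : 0 <= (r - 1)^-1 by rewrite invr_ge0; lra.
have := archi_boundP r10.
set n := Num.Def.archi_bound _ => hn.
have h2 : (n%:R : R) <= (2 ^ n)%:R.
  by rewrite ler_nat; apply: ltnW; apply: ltn_expl.
have := bern (2 ^ n)%N; have := hr n.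
have : 1 < (2 ^ n)%:R * (r - 1).
  have rp : 0 < r - 1 by lra.
  by rewrite -ltr_pdivrMr // div1r; apply: (lt_le_trans hn).
lra.
Qed.

Section C.
Context (R : realType) (A : algType R[i]) (star : A -> A)
    (nrm : A -> R) (hA : unital_Cstar_algebra star nrm).

Lemma star0 : star 0 = 0.
Proof.
have h := star_add hA 0 0; rewrite addr0 in h.
by have := congr1 (fun z => z - star 0) h; rewrite subrr addrK.
Qed.

Lemma starN x : star (- x) = - star x.
Proof.
apply/eqP; rewrite -addr_eq0 -(star_add hA).
by rewrite addNr star0.
Qed.

Lemma starB x y : star (x - y) = star x - star y.
Proof. by rewrite (star_add hA) starN. Qed.

Lemma star1 : star 1 = 1.
Proof.
have h := congr1 star (mulr1 (star 1)).
by rewrite (star_mul hA) !(star_invol hA) mulr1 in h.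
Qed.

Lemma nrm_star x : nrm (star x) = nrm x.
Proof.
have key : forall y, nrm y <= nrm (star y).
  move=> y; have h := nrm_Cstar hA y.
  have h2 := nrm_submul hA (star y) y.
  have p1 := nrm_ge0 hA y; have p2 := nrm_ge0 hA (star y).
  rewrite h in h2; nra.
apply/le_anti; rewrite key andbT.
by have := key (star x); rewrite (star_invol hA).
Qed.

Lemma nrm_proj E : star E = E -> E * E = E -> nrm E <= 1.
Proof.
move=> sE EE; have h := nrm_Cstar hA E; rewrite sE EE in h.
have := nrm_ge0 hA E; nra.
Qed.

Lemma nrm_unit w : star w = w -> w * w = 1 -> nrm w <= 1.
Proof.
move=> sw ww; have h := nrm_Cstar hA w; rewrite sw ww in h.
have h1 := nrm_proj star1 (mulr1 1).
have := nrm_ge0 hA w; nra.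
Qed.

Lemma nrm_mul_l w x : nrm w <= 1 -> nrm (w * x) <= nrm x.
Proof.
move=> h; have := nrm_submul hA w x; have := nrm_ge0 hA x; have := nrm_ge0 hA w; nra.
Qed.

Lemma nrm_mul_r w x : nrm w <= 1 -> nrm (x * w) <= nrm x.
Proof.
move=> h; have := nrm_submul hA x w; have := nrm_ge0 hA x; have := nrm_ge0 hA w; nra.
Qed.

Lemma nrm_unit_l w x : star w = w -> w * w = 1 -> nrm (w * x) = nrm x.
Proof.
move=> sw ww; have h := nrm_unit sw ww; apply/le_anti.
rewrite nrm_mul_l //=.
by have := nrm_mul_l w (w * x) h; rewrite mulrA ww mul1r.
Qed.

Lemma nrm_unit_r w x : star w = w -> w * w = 1 -> nrm (x * w) = nrm x.
Proof.
move=> sw ww; have h := nrm_unit sw ww; apply/le_anti.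
rewrite nrm_mul_r //=.
by have := nrm_mul_r w (x * w) h; rewrite -mulrA ww mulr1.
Qed.

Lemma nrmN x : nrm (- x) = nrm x.
Proof.
rewrite -mulN1r nrm_unit_l // ?mulrNN ?mulr1 //.
by rewrite starN star1.
Qed.

Lemma nrm_orth_pow n : forall u v, star u = u -> star v = v -> u * v = 0 -> v * u = 0 ->
  nrm (u + v) ^+ (2 ^ n) <= nrm u ^+ (2 ^ n) + nrm v ^+ (2 ^ n).
Proof.
elim: n => [|n IH] u v su sv uv vu.
  by rewrite !expn0 !expr1; apply: (nrm_triangle hA).
have sq : forall y, star y = y -> nrm y ^+ (2 ^ n.+1) = nrm (y * y) ^+ (2 ^ n).
  by move=> y sy; rewrite expnS exprM -(nrm_Cstar hA) sy.
rewrite !sq //; last by rewrite (star_add hA) su sv.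
have -> : (u + v) * (u + v) = u * u + v * v.
  by rewrite mulrDl !mulrDr uv vu addr0 add0r.
apply: IH; rewrite ?(star_mul hA) ?su ?sv //.
  by rewrite mulrA -(mulrA u u v) uv mulr0 mul0r.
by rewrite mulrA -(mulrA v v u) vu mulr0 mul0r.
Qed.

Lemma nrm_orth u v : star u = u -> star v = v -> u * v = 0 -> v * u = 0 ->
  nrm (u + v) <= Num.max (nrm u) (nrm v).
Proof.
move=> su sv uv vu.
have m0 : 0 <= Num.max (nrm u) (nrm v) by rewrite le_max (nrm_ge0 hA).
apply: real_lim => //; first exact: (nrm_ge0 hA).
move=> n; apply: (le_trans (nrm_orth_pow n su sv uv vu)).
have hu : nrm u ^+ (2 ^ n) <= Num.max (nrm u) (nrm v) ^+ (2 ^ n).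
  apply: lerXn2r; rewrite ?nnegrE ?(nrm_ge0 hA) //; by rewrite le_max lexx.
have hv : nrm v ^+ (2 ^ n) <= Num.max (nrm u) (nrm v) ^+ (2 ^ n).
  apply: lerXn2r; rewrite ?nnegrE ?(nrm_ge0 hA) //; by rewrite le_max lexx orbT.
lra.
Qed.

Lemma orth_gen E X Y : star E = E -> E * E = E ->
  nrm (E * X * E + (1 - E) * Y * (1 - E)) <=
  Num.max (nrm (E * X * E)) (nrm ((1 - E) * Y * (1 - E))).
Proof.
move=> sE EE.
set a := E * X * E; set b := (1 - E) * Y * (1 - E).
have sa : star a = E * (star X * E) by rewrite /a !(star_mul hA) sE.
have sb : star b = (1 - E) * (star Y * (1 - E)) by rewrite /b !(star_mul hA) starB star1 sE.
have EF : forall z, E * ((1 - E) * z) = 0.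
  by move=> z; rewrite mulrA mulrBr mulr1 EE subrr mul0r.
have FE : forall z, (1 - E) * (E * z) = 0.
  by move=> z; rewrite mulrA mulrBl mul1r EE subrr mul0r.
have ab : star a * b = 0 by rewrite sa /b -!mulrA EF !mulr0.
have ba : star b * a = 0 by rewrite sb /a -!mulrA FE !mulr0.
have su : star (star a * a) = star a * a by rewrite (star_mul hA) (star_invol hA).
have sv : star (star b * b) = star b * b by rewrite (star_mul hA) (star_invol hA).
have uv : (star a * a) * (star b * b) = 0 by rewrite sa sb /a /b -!mulrA EF !mulr0.
have vu : (star b * b) * (star a * a) = 0 by rewrite sa sb /a /b -!mulrA FE !mulr0.
have key : nrm (a + b) ^+ 2 = nrm (star a * a + star b * b).
  by rewrite -(nrm_Cstar hA) (star_add hA) mulrDl !mulrDr ab ba addr0 add0r.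
have h := nrm_orth su sv uv vu.
rewrite !(nrm_Cstar hA) -key in h.
set M := Num.max (nrm a) (nrm b).
have M0 : 0 <= M by rewrite le_max (nrm_ge0 hA).
have ha : nrm a ^+ 2 <= M ^+ 2.
  apply: lerXn2r; rewrite ?nnegrE ?(nrm_ge0 hA) //; by rewrite le_max lexx.
have hb : nrm b ^+ 2 <= M ^+ 2.
  apply: lerXn2r; rewrite ?nnegrE ?(nrm_ge0 hA) //; by rewrite le_max lexx orbT.
have h2 : nrm (a + b) ^+ 2 <= M ^+ 2.
  by apply: (le_trans h); rewrite ge_max ha hb.
have := nrm_ge0 hA (a + b); nra.
Qed.

End C.

Theorem theorem5p13 (R : realType) (A : algType R[i]) (star : A -> A)
    (nrm : A -> R) (hA : unital_Cstar_algebra star nrm) (P Q : A)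
    (hPQ : quasi_projection_pair star P Q) :
  nrm ((1 - P) * Q) = nrm (Q * (1 - P)) /\
  nrm ((1 - Q) * P) = nrm (P * (1 - Q)) /\
  nrm ((P - Q) ^+ 2) <= Num.max (nrm ((1 - P) * Q)) (nrm ((1 - Q) * P)) /\
  Num.max (nrm ((1 - P) * Q)) (nrm ((1 - Q) * P)) <= nrm (P - Q).
Proof.
move: hPQ => [[sP PP] [QQ sQ]].
set S := P *+ 2 - 1 in sQ *.
have SP : S * P = P by rewrite /S mulrBl mul1r mulrnAl PP mulr2n addrK.
have PS : P * S = P by rewrite /S mulrBr mulr1 mulrnAr PP mulr2n addrK.
have SF : S * (1 - P) = - (1 - P).
  by rewrite mulrBr mulr1 SP /S opprB mulr2n addrAC addrK.
have SS : S * S = 1.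
  by rewrite {1}/S mulrBl mul1r mulrnAl PS /S opprB addrC subrK.
have sS : star S = S by rewrite /S (starB hA) mulr2n (star_add hA) sP (star1 hA).
clearbody S.
have sF : star (1 - P) = 1 - P by rewrite (starB hA) (star1 hA) sP.
have FF : (1 - P) * (1 - P) = 1 - P.
  by rewrite mulrBr mulr1 mulrBl mul1r PP subrr subr0.
have nP : nrm P <= 1 := nrm_proj hA sP PP.
have nF : nrm (1 - P) <= 1 := nrm_proj hA sF FF.
have FP : (1 - P) * P = 0 by rewrite mulrBl mul1r PP subrr.
have e1 : nrm ((1 - P) * Q) = nrm (Q * (1 - P)).
  rewrite -(nrm_star hA) (star_mul hA) sF sQ -(mulrA (S * Q) S) SF mulrN (nrmN hA) -mulrA.
  exact: (nrm_unit_l hA _ sS SS).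
have e2 : nrm ((1 - Q) * P) = nrm (P * (1 - Q)).
  rewrite -(nrm_star hA) (star_mul hA) (starB hA) (star1 hA) sP sQ.
  have -> : P * (1 - S * Q * S) = P * (1 - Q) * S.
    by rewrite !mulrBr !mulr1 mulrBl !mulrA PS.
  exact: (nrm_unit_r hA _ sS SS).
have h1 : nrm ((1 - P) * Q) <= nrm (P - Q).
  have -> : (1 - P) * Q = (1 - P) * (Q - P) by rewrite mulrBr FP subr0.
  by rewrite -(nrmN hA (P - Q)) opprB; exact: (nrm_mul_l hA _ _ nF).
have h2 : nrm ((1 - Q) * P) <= nrm (P - Q).
  rewrite e2.
  have -> : P * (1 - Q) = P * (P - Q) by rewrite !mulrBr PP mulr1.
  exact: (nrm_mul_l hA _ _ nP).
have sq : (P - Q) ^+ 2 = P * (1 - Q) * P + (1 - P) * Q * (1 - P).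
  have h3 : P * (P - Q) = P * (1 - Q) by rewrite !mulrBr PP mulr1.
  have h4 : (1 - Q) * (P - Q) = (1 - Q) * P.
    by rewrite mulrBr [(1 - Q) * Q]mulrBl mul1r QQ subrr subr0.
  have h5 : (1 - P) * (P - Q) = - ((1 - P) * Q) by rewrite mulrBr FP sub0r.
  have h6 : Q * (P - Q) = - (Q * (1 - P)) by rewrite !mulrBr QQ mulr1 opprB.
  rewrite expr2.
  have -> : (P - Q) * (P - Q) = (P + (1 - P)) * ((P - Q) * (P - Q)).
    by rewrite (addrC P (1 - P)) subrK mul1r.
  rewrite mulrDl !mulrA h3 h5 -(mulrA _ (1 - Q)) h4 mulNr -(mulrA _ Q) h6 mulrN opprK.
  by rewrite !mulrA.
split=> //; split=> //; split; last by rewrite ge_max h1 h2.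
rewrite sq; apply: (le_trans (orth_gen hA _ _ sP PP)).
rewrite ge_max; apply/andP; split; rewrite le_max; apply/orP.
  right; rewrite e2; exact: (nrm_mul_r hA _ _ nP).
left; exact: (nrm_mul_r hA _ _ nF).
Qed.
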